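(* Let $K$ be a field, $\kappa$ an infinite cardinal and $\mathcal R=(R_\alpha\mid\alpha<\kappa)$ a sequence of $K$-algebras. If $R_\alpha\in\mathfrak R_K$ for each $\alpha<\kappa$, then $R(\kappa,K,\mathcal R)\in\mathfrak R_K$.
   Context: $R(\kappa,K,\mathcal R)$ denotes the $K$-subalgebra $I\oplus1_P\cdot K$ of $P=\prod_{\alpha<\kappa}R_\alpha$, where $I=\bigoplus_{\alpha<\kappa}R_\alpha$. Socle sequence: $S_0=0$, $S_{\alpha+1}/S_\alpha=\mathrm{Soc}(R/S_\alpha)$, unions at limits; semiartinian of Loewy length $\sigma+1$ means $S_{\sigma+1}=R\neq S_\sigma$; layers $L_\alpha=S_{\alpha+1}/S_\alpha$. $K^{(\lambda)}$ is the direct sum of $\lambda$ copies of $K$ as a $K$-algebra without unit. $\mathfrak R_K$ is the class of commutative von Neumann regular semiartinian $K$-algebras $R$ of Loewy length $\sigma+1$ such that for each $\alpha\le\sigma$ there is a cardinal $\lambda_\alpha>0$ and a $K$-linear isomorphism of $K$-algebras without unit $L_\alpha\cong K^{(\lambda_\alpha)}$. *)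

(* Defs.v *)
From HB Require Import structures.
From mathcomp Require Import all_boot all_algebra.
From mathcomp Require Import boolp classical_sets cardinality.
Set Implicit Arguments.
Unset Strict Implicit.
Unset Printing Implicit Defensive.
Import GRing.Theory.
Local Open Scope ring_scope.
Local Open Scope classical_set_scope.

(* (componentwise operations).  The index type is pointed only so that  *)
(* P can be given MathComp's (nontrivial) ring structure; the index set *)
(* of the theorem is infinite, hence inhabited, so this is harmless.    *)
Section DProd.
Variables (K : fieldType) (I : pointedType) (R : I -> algType K).

Definition dprod := forall i, R i.

HB.instance Definition _ := gen_eqMixin dprod.
HB.instance Definition _ := gen_choiceMixin dprod.

Definition dp_zero : dprod := fun i => 0.
Definition dp_opp (x : dprod) : dprod := fun i => - x i.
Definition dp_add (x y : dprod) : dprod := fun i => x i + y i.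
Definition dp_one : dprod := fun i => 1.
Definition dp_mul (x y : dprod) : dprod := fun i => x i * y i.
Definition dp_scale (k : K) (x : dprod) : dprod := fun i => k *: x i.

Let fe := @functional_extensionality_dep.

Lemma dp_addA : associative dp_add.
Proof. by move=> x y z; apply: fe => i; rewrite /dp_add addrA. Qed.
Lemma dp_addC : commutative dp_add.
Proof. by move=> x y; apply: fe => i; rewrite /dp_add addrC. Qed.
Lemma dp_add0 : left_id dp_zero dp_add.
Proof. by move=> x; apply: fe => i; rewrite /dp_add add0r. Qed.
Lemma dp_addN : left_inverse dp_zero dp_opp dp_add.
Proof. by move=> x; apply: fe => i; rewrite /dp_add /dp_opp addNr. Qed.

HB.instance Definition _ :=
  GRing.isZmodule.Build dprod dp_addA dp_addC dp_add0 dp_addN.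

Lemma dp_mulA : associative dp_mul.
Proof. by move=> x y z; apply: fe => i; rewrite /dp_mul mulrA. Qed.
Lemma dp_mul1 : left_id dp_one dp_mul.
Proof. by move=> x; apply: fe => i; rewrite /dp_mul mul1r. Qed.
Lemma dp_mulr1 : right_id dp_one dp_mul.
Proof. by move=> x; apply: fe => i; rewrite /dp_mul mulr1. Qed.
Lemma dp_mulDl : left_distributive dp_mul +%R.
Proof. by move=> x y z; apply: fe => i; rewrite /dp_mul mulrDl. Qed.
Lemma dp_mulDr : right_distributive dp_mul +%R.
Proof. by move=> x y z; apply: fe => i; rewrite /dp_mul mulrDr. Qed.
Lemma dp_one_neq0 : dp_one != 0.
Proof.
apply/eqP => /(congr1 (fun f : dprod => f point)).
by rewrite /dp_one => /eqP; rewrite oner_eq0.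
Qed.

HB.instance Definition _ :=
  GRing.Zmodule_isNzRing.Build dprod dp_mulA dp_mul1 dp_mulr1
    dp_mulDl dp_mulDr dp_one_neq0.

Lemma dp_scaleA a b v : dp_scale a (dp_scale b v) = dp_scale (a * b) v.
Proof. by apply: fe => i; rewrite /dp_scale scalerA. Qed.
Lemma dp_scale1 : left_id 1 dp_scale.
Proof. by move=> x; apply: fe => i; rewrite /dp_scale scale1r. Qed.
Lemma dp_scaleDr : right_distributive dp_scale +%R.
Proof. by move=> a x y; apply: fe => i; rewrite /dp_scale scalerDr. Qed.
Lemma dp_scaleDl v : {morph dp_scale^~ v : a b / a + b}.
Proof. by move=> a b; apply: fe => i; rewrite /dp_scale scalerDl. Qed.

HB.instance Definition _ :=
  GRing.Zmodule_isLmodule.Build K dprod dp_scaleA dp_scale1 dp_scaleDr dp_scaleDl.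

Lemma dp_scaleAl (a : K) (u v : dprod) : a *: (u * v) = (a *: u) * v.
Proof. by apply: fe => i; rewrite /GRing.scale /= /dp_scale /dp_mul scalerAl. Qed.

HB.instance Definition _ := GRing.Lmodule_isLalgebra.Build K dprod dp_scaleAl.

Lemma dp_scaleAr (a : K) (u v : dprod) : a *: (u * v) = u * (a *: v).
Proof. by apply: fe => i; rewrite /GRing.scale /= /dp_scale /dp_mul scalerAr. Qed.

HB.instance Definition _ := GRing.Lalgebra_isAlgebra.Build K dprod dp_scaleAr.

End DProd.

Definition Rkappa (K : fieldType) (I : pointedType) (R : I -> algType K)
  : set (dprod R) :=
  [set x | exists (k : K) (y : dprod R),
           finite_set [set i | y i != 0] /\ x = y + k *: 1].
Arguments Rkappa {K I} R _.

(* Ring-theoretic notions for a K-subalgebra S of an ambient K-algebra A *)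
(* (a K-algebra R is treated as the subalgebra [set: R] of itself).      *)
Section Class.
Variables (K : fieldType) (A : algType K).

Definition is_subalgebra (S : set A) : Prop :=
  [/\ S 1, (forall x y, S x -> S y -> S (x + y)), (forall x, S x -> S (- x)),
      (forall x y, S x -> S y -> S (x * y)) &
      (forall (k : K) x, S x -> S (k *: x))].

Definition is_ideal (S J : set A) : Prop :=
  [/\ J `<=` S, J 0, (forall x y, J x -> J y -> J (x + y)),
      (forall x, J x -> J (- x)) &
      (forall s x, S s -> J x -> J (s * x) /\ J (x * s))].

(* M/J is a minimal (i.e. simple) ideal of S/J *)
Definition minimal_over (S J M : set A) : Prop :=
  [/\ is_ideal S M, J `<` M &
      forall N, is_ideal S N -> J `<=` N -> N `<=` M -> N = J \/ N = M].

(* socle_step S J = the ideal T of S containing J with T/J = Soc(S/J),  *)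
(* Soc(S/J) being the sum of the minimal ideals of S/J.                 *)
Definition socle_step (S J : set A) : set A :=
  [set x | exists (j : A) (s : seq A),
     [/\ J j,
         (forall m, m \in s -> exists M, minimal_over S J M /\ M m) &
         x = j + \sum_(m <- s) m]].

Definition is_wellorder (O : Type) (lt : O -> O -> Prop) : Prop :=
  [/\ well_founded lt, (forall a b c, lt a b -> lt b c -> lt a c) &
      (forall a b, lt a b \/ a = b \/ lt b a)].

Definition is_succ (O : Type) (lt : O -> O -> Prop) (a b : O) : Prop :=
  lt a b /\ ~ (exists c, lt a c /\ lt c b).

Definition is_socle_sequence (S : set A) (O : Type) (lt : O -> O -> Prop)
    (Ssq : O -> set A) : Prop :=
  forall a,
    [/\ (forall b, ~ lt b a) -> Ssq a = [set 0],
        (forall b, is_succ lt b a -> Ssq a = socle_step S (Ssq b)) &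
        ((exists b, lt b a) -> (forall b, ~ is_succ lt b a) ->
           Ssq a = \bigcup_(b in [set b | lt b a]) Ssq b)].

Definition finsupp (Lam : Type) (g : Lam -> K) : Prop :=
  finite_set [set l | g l != 0].

(* The layer Jb/Ja is isomorphic, as a K-algebra without unit, to K^(Lam) *)
(* for some nonempty Lam: there is a K-linear multiplicative map from Jb  *)
(* onto K^(Lam) whose kernel is Ja (Ja being contained in Jb).           *)
Definition layer_iso (Jb Ja : set A) : Prop :=
  exists (Lam : Type), inhabited Lam /\
  exists f : A -> Lam -> K,
    (forall x, Jb x -> finsupp (f x)) /\
    (forall x y, Jb x -> Jb y -> f (x + y) = (fun l => f x l + f y l)) /\
    (forall (k : K) x, Jb x -> f (k *: x) = (fun l => k * f x l)) /\
    (forall x y, Jb x -> Jb y -> f (x * y) = (fun l => f x l * f y l)) /\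
    (forall g : Lam -> K, finsupp g -> exists2 x, Jb x & f x = g) /\
    (forall x, Jb x -> (f x = (fun _ => 0) <-> Ja x)).

(* The class frak R_K: commutative von Neumann regular semiartinian      *)
(* K-algebras of Loewy length sigma+1 all of whose layers L_a (a<=sigma) *)
(* are isomorphic to K^(lambda_a), lambda_a > 0.                        *)
Definition in_frakR (S : set A) : Prop :=
  [/\ is_subalgebra S,
      (forall x y, S x -> S y -> x * y = y * x),
      (forall x, S x -> exists2 y, S y & x = x * y * x) &
      exists (O : Type) (lt : O -> O -> Prop) (Ssq : O -> set A) (sigma top : O),
        is_wellorder lt /\ is_socle_sequence S lt Ssq /\
        is_succ lt sigma top /\ (forall a, a = top \/ lt a top) /\
        Ssq top = S /\ Ssq sigma <> S /\
        (forall a b, is_succ lt a b -> layer_iso (Ssq b) (Ssq a))].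

End Class.

(* Main.v *)
Require Import Defs.
From HB Require Import structures.
From mathcomp Require Import all_boot all_algebra.
From mathcomp Require Import boolp classical_sets cardinality.
Import GRing.Theory.
Local Open Scope ring_scope.
Local Open Scope classical_set_scope.

From Stdlib Require Import Eqdep_dec.

Module Tower.
Unset Implicit Arguments.

Lemma properI T (A B : set T) : A `<=` B -> A <> B -> A `<` B.
Proof. by move=> AB neq; split => // BA; apply: neq; apply/seteqP; split. Qed.
Lemma proper_ne T (A B : set T) : A `<` B -> A <> B.
Proof. by move=> [AB nBA] e; apply: nBA; rewrite e. Qed.

Section Tower.
Variables (T : Type) (z : set T) (step : set T -> set T).
Hypothesis infl : forall J, J `<=` step J.

Inductive tower : set T -> Prop :=
| tw0 : tower z
| twS J : tower J -> tower (step J)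
| twU (F : set (set T)) : F !=set0 -> (forall J, F J -> tower J) ->
    tower (\bigcup_(J in F) J).

Lemma tower_z J : tower J -> z `<=` J.
Proof.
elim=> [|J' _ IH|F [J0 FJ0] _ IH] //.
  exact: subset_trans IH (infl J').
by move=> x zx; exists J0 => //; apply: IH.
Qed.

Definition extreme c := forall d, tower d -> d `<` c -> step d `<=` c.

Lemma extreme_cmp c : tower c -> extreme c ->
  forall d, tower d -> d `<=` c \/ step c `<=` d.
Proof.
move=> tc ec d; elim=> [|J tJ IH|F F0 tF IH].
- by left; apply: tower_z.
- case: IH => [Jc|cJ].
  + have [->|neq] := pselect (J = c); first by right.
    left; apply: ec => //; exact: properI.
  + by right; apply: subset_trans cJ (infl J).
- have [allc|] := pselect (forall J, F J -> J `<=` c).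
    by left => x [J FJ Jx]; apply: allc FJ _ Jx.
  move=> /existsNP[J /not_implyP[FJ nJc]].
  case: (IH J FJ) => // cJ; right => x /cJ Jx; by exists J.
Qed.

Arguments extreme_cmp {c} _ _ {d} _.

Lemma tower_extreme : forall c, tower c -> extreme c.
Proof.
move=> c; elim=> [|c0 tc IH|F F0 tF IH].
- move=> d td [dz nzd]; exfalso; apply: nzd; exact: tower_z.
- move=> d td [dsc ndsc].
  case: (extreme_cmp tc IH td) => [dc|scd]; last first.
    by exfalso; apply: ndsc.
  have [->|neq] := pselect (d = c0); first by [].
  apply: subset_trans (IH d td _) (infl c0); exact: properI.
- move=> d td [dU ndU].
  have [allstep|] := pselect (forall J, F J -> step J `<=` d).
    exfalso; apply: ndU => x [J FJ Jx].
    by apply: allstep FJ _ _; apply: infl.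
  move=> /existsNP[J /not_implyP[FJ nJd]].
  case: (extreme_cmp (tF J FJ) (IH J FJ) td) => // dJ.
  have [eqdJ|neq] := pselect (d = J).
  + subst d.
    have [allJ|] := pselect (forall J', F J' -> J' `<=` J).
      exfalso; apply: ndU => x [J' FJ' J'x].
      exact: allJ FJ' _ J'x.
    move=> /existsNP[J' /not_implyP[FJ' nJ'J]].
    case: (extreme_cmp (tF J FJ) (IH J FJ) (tF J' FJ')) => // sJ.
    by move=> x /sJ J'x; exists J'.
  + have dJ' : d `<` J by apply: properI.
    move=> x /(IH J FJ d td dJ') Jx; by exists J.
Qed.

Lemma tower_cmp c d : tower c -> tower d -> d `<=` c \/ c `<=` d.
Proof.
move=> tc td; case: (extreme_cmp tc (tower_extreme _ tc) td) => [|h]; first by left.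
by right; apply: subset_trans (infl c) h.
Qed.

Arguments tower_cmp {c d}.
Lemma tower_next c d : tower c -> tower d -> c `<` d -> step c `<=` d.
Proof.
move=> tc td [cd ncd]; by case: (extreme_cmp tc (tower_extreme _ tc) td).
Qed.

Arguments tower_next {c d}.
Lemma tower_fix c : tower c -> step c = c -> forall d, tower d -> d `<=` c.
Proof.
move=> tc sc d; elim=> [|J tJ IH|F F0 tF IH].
- exact: tower_z.
- case: (extreme_cmp tJ (tower_extreme _ tJ) tc) => // cJ.
  have -> : J = c by apply/seteqP; split.
  by rewrite sc.
- by move=> x [J FJ Jx]; apply: IH FJ _ Jx.
Qed.

Lemma tower_shape d : tower d ->
  d = z \/ (exists2 b, tower b & b `<` d /\ d = step b) \/
  d = \bigcup_(b in [set b | tower b /\ b `<` d]) b.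
Proof.
elim=> [|J tJ IH|F F0 tF IH]; first by left.
- have [eq|neq] := pselect (step J = J); last first.
    right; left; exists J => //; split => //; apply: properI; first exact: infl.
    by move=> e; apply: neq; rewrite -e.
  by rewrite eq.
- set U := \bigcup_(J in F) J.
  have [[J FJ eq]|] := pselect (exists2 J, F J & J = U).
    by rewrite -eq; apply: IH.
  move=> nU; right; right; apply/seteqP; split.
  + move=> x [J FJ Jx]; exists J => //; split; first exact: tF.
    apply: properI; first by move=> y Jy; exists J.
    by move=> e; apply: nU; exists J.
  + by move=> x [b [_ [bU _]] /bU].
Qed.

Lemma tower_minimal (D : set (set T)) : D !=set0 -> (forall J, D J -> tower J) ->
  exists2 m, D m & forall J, D J -> m `<=` J.
Proof.
move=> [J0 DJ0] tD.
set L := [set d | tower d /\ forall J, D J -> d `<=` J].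
have L0 : L !=set0 by exists z; split; [constructor|move=> J /tD/tower_z].
set U := \bigcup_(d in L) d.
have tU : tower U by apply: twU => // d [].
have UL : forall J, D J -> U `<=` J by move=> J DJ x [d [_ dJ] dx]; apply: dJ DJ _ dx.
have [DU|nDU] := pselect (D U); first by exists U.
exfalso.
have sUL : L (step U).
  split; first by constructor.
  move=> J DJ; apply: tower_next => //; first exact: tD.
  apply: properI; first exact: UL.
  by move=> e; apply: nDU; rewrite e.
have sUU : step U `<=` U by move=> x sx; exists (step U).
have fixU : step U = U by apply/seteqP; split => //; apply: infl.
apply: nDU.
have J0U := tower_fix _ tU fixU _ (tD _ DJ0).
have -> : U = J0 by apply/seteqP; split => //; apply: UL.
exact: DJ0.
Qed.

End Tower.

End Tower.
Import Tower.

Module Step.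
Set Implicit Arguments.
Unset Strict Implicit.

Section Step.
Variables (K : fieldType) (A : algType K) (S : set A).

Lemma step_infl J : J `<=` socle_step S J.
Proof. by move=> x Jx; exists x, [::]; split => //; rewrite big_nil addr0. Qed.

Lemma step_ind J (Q : A -> Prop) :
  (forall x y, Q x -> Q y -> Q (x + y)) -> J `<=` Q ->
  (forall M, minimal_over S J M -> M `<=` Q) ->
  socle_step S J `<=` Q.
Proof.
move=> Qadd JQ MQ x [j [s [Jj sM ->]]].
elim: s sM => [|m s IH] sM; first by rewrite big_nil addr0; apply: JQ.
rewrite big_cons addrCA; apply: Qadd.
  have [M [mM Mm]] := sM m (mem_head _ _); exact: MQ mM _ Mm.
by apply: IH => m' m's; apply: sM; rewrite in_cons m's orbT.
Qed.

Lemma step_min J M m : is_ideal S J -> minimal_over S J M -> M m ->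
  socle_step S J m.
Proof.
move=> [_ J0 _ _ _] mM Mm; exists 0, [:: m]; split => //.
  by move=> m'; rewrite inE => /eqP ->; exists M.
by rewrite big_seq1 add0r.
Qed.

Lemma step_add J x y : is_ideal S J -> socle_step S J x -> socle_step S J y ->
  socle_step S J (x + y).
Proof.
move=> [_ _ Jadd _ _] [j1 [s1 [J1 s1M ->]]] [j2 [s2 [J2 s2M ->]]].
exists (j1 + j2), (s1 ++ s2); split; first exact: Jadd.
  by move=> m; rewrite mem_cat => /orP[/s1M|/s2M].
by rewrite big_cat /= addrACA.
Qed.

Lemma step_ideal J : is_ideal S J -> S 0 ->
  (forall x y, S x -> S y -> S (x + y)) -> is_ideal S (socle_step S J).
Proof.
move=> iJ S0 Sadd; have [JS J0 Jadd Jopp Jmul] := iJ.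
have stadd := step_add iJ.
split.
- apply: step_ind => //; first by move=> M [[MS _ _ _ _] _ _].
- exact: step_infl.
- exact: stadd.
- move=> x; apply: (step_ind (Q := fun x => socle_step S J (- x))).
  + by move=> a b ha hb; rewrite opprD; apply: stadd.
  + by move=> a Ja; apply: step_infl; apply: Jopp.
  + move=> M mM a Ma; apply: (step_min iJ mM).
    by case: mM => [[_ _ _ Mopp _] _ _]; apply: Mopp.
- move=> s x Ss; apply: (step_ind (Q := fun x =>
     socle_step S J (s * x) /\ socle_step S J (x * s))).
  + by move=> a b [ha1 ha2] [hb1 hb2]; rewrite mulrDr mulrDl; split; apply: stadd.
  + by move=> a Ja; have [h1 h2] := Jmul s a Ss Ja; split; apply: step_infl.
  + move=> M mM a Ma; case: (mM) => [[_ _ _ _ Mmul] _ _].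
    by have [h1 h2] := Mmul s a Ss Ma; split; apply: (step_min iJ mM).
Qed.

Lemma ideal_bigcup (I0 : Type) (D : set I0) (G : I0 -> set A) : D !=set0 ->
  (forall i, D i -> is_ideal S (G i)) ->
  (forall i j, D i -> D j -> G i `<=` G j \/ G j `<=` G i) ->
  is_ideal S (\bigcup_(i in D) G i).
Proof.
move=> [i0 Di0] iF ch; split.
- by move=> x [J FJ Jx]; case: (iF J FJ) => + _ _ _ _; apply.
- by exists i0 => //; case: (iF i0 Di0).
- move=> x y [J1 F1 J1x] [J2 F2 J2y].
  case: (ch J1 J2 F1 F2) => sub.
  + by exists J2 => //; case: (iF J2 F2) => _ _ + _ _; apply => //; apply: sub.
  + by exists J1 => //; case: (iF J1 F1) => _ _ + _ _; apply => //; apply: sub.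
- by move=> x [J FJ Jx]; exists J => //; case: (iF J FJ) => _ _ _ + _; apply.
- move=> s x Ss [J FJ Jx]; case: (iF J FJ) => _ _ _ _ /(_ s x Ss Jx) [h1 h2].
  by split; exists J.
Qed.

End Step.

End Step.
Import Step.

Module Comp.
Set Implicit Arguments.
Unset Strict Implicit.

Section Comp.
Variables (K : fieldType) (A : algType K).
Local Notation step := (socle_step [set: A]).

Definition comp_ok (Img : set (set A)) : Prop :=
  [/\ Img [set 0], (forall X, Img X -> is_ideal [set: A] X),
      (forall X, Img X -> Img (step X)),
      (forall F, F !=set0 -> F `<=` Img -> Img (\bigcup_(X in F) X)) &
      (forall X, Img X -> X <> [set: A] -> layer_iso (step X) X)].

Lemma step_setT : step [set: A] = [set: A].
Proof. by apply/seteqP; split => //; apply: step_infl. Qed.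

Lemma comp_facts : in_frakR [set: A] -> exists Img, comp_ok Img.
Proof.
case=> _ _ _ [O [lt [Ssq [sigma [top [[wf trans tot] [ss [_ [topmax [Stop [_ layers]]]]]]]]]]].
have minex : forall D : set O, D !=set0 -> exists m, D m /\ forall y, D y -> ~ lt y m.
  move=> D [a Da]; elim: (wf a) Da => a' _ IH Da'.
  have [[y [Dy ly]]|n] := pselect (exists y, D y /\ lt y a'); first exact: IH ly Dy.
  by exists a'; split => // y Dy ly; apply: n; exists y.
have irr : forall a, ~ lt a a.
  move=> a; elim: (wf a) => a1 _ IH1; exact: (fun hh => IH1 a1 hh hh).
have mono : forall b a, lt a b -> Ssq a `<=` Ssq b.
  apply: (well_founded_ind wf) => b IH a ab.
  have [Smin Ssuc Slim] := ss b.
  have [[c cb]|nsucc] := pselect (exists c, is_succ lt c b).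
    rewrite (Ssuc c cb); have [cb1 cb2] := cb.
    case: (tot a c) => [ac|[->|ca]]; last first.
    - by exfalso; apply: cb2; exists a.
    - exact: step_infl.
    - by move=> x /(IH c cb1 a ac); apply: step_infl.
  rewrite Slim; first by move=> x Sx; exists a.
  - by exists a.
  - by move=> c cb; apply: nsucc; exists c.
have le_top : forall a, a <> top -> lt a top by move=> a; case: (topmax a).
have succ_ex : forall a, a <> top -> exists s, is_succ lt a s.
  move=> a atop; have [s [las smin]] := minex [set c | lt a c] (ex_intro _ top (le_top _ atop)).
  by exists s; split => // -[c [ac cs]]; apply: smin cs.
have ideals : forall b, is_ideal [set: A] (Ssq b).
  apply: (well_founded_ind wf) => b IH.
  have [Smin Ssuc Slim] := ss b.
  have [nb|] := pselect (forall c, ~ lt c b).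
    rewrite (Smin nb); split => //.
    - by move=> x y -> ->; rewrite addr0.
    - by move=> x ->; rewrite oppr0.
    - by move=> s x _ ->; rewrite mulr0 mul0r.
  move=> /existsNP[c0 /contrapT c0b].
  have [[c cb]|nsucc] := pselect (exists c, is_succ lt c b).
    by rewrite (Ssuc c cb); apply: step_ideal => //; apply: IH; case: cb.
  rewrite Slim; [|by exists c0|by move=> c cb; apply: nsucc; exists c].
  apply: ideal_bigcup.
  - by exists c0.
  - by move=> c cb; apply: IH.
  - move=> c1 c2 _ _.
    case: (tot c1 c2) => [h|[->|h]]; [left; exact: mono _ _ h|by left|right; exact: mono _ _ h].
have Sstep : forall a, a <> top -> forall s, is_succ lt a s -> Ssq s = step (Ssq a).
  by move=> a _ s sa; have [_ h _] := ss s; apply: h.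
exists (range Ssq); split.
- have [m [_ mmin]] := minex setT (ex_intro _ top I).
  exists m => //; have [h _ _] := ss m; apply: h => b bm; exact: mmin I bm.
- by move=> X [a _ <-].
- move=> X [a _ <-].
  have [->|atop] := pselect (a = top); first by rewrite Stop step_setT; exists top.
  by have [s sa] := succ_ex a atop; exists s => //; rewrite (Sstep a atop s sa).
- move=> F F0 FImg.
  set D := [set a | F (Ssq a)].
  set UB := [set b | forall a, D a -> lt a b \/ a = b].
  have UB0 : UB !=set0.
    by exists top => a _; case: (topmax a) => [->|h]; [right|left].
  have [b [UBb bmin]] := minex UB UB0.
  have [Db|nDb] := pselect (D b).
    exists b => //; apply/seteqP; split; first by move=> x Sx; exists (Ssq b).
    move=> x [X FX Xx]; have [a _ Xa] := FImg X FX; subst X.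
    by case: (UBb a FX) => [ab|<-] //; exact: (mono b a ab x Xx).
  have ltD : forall a, D a -> lt a b.
    by move=> a Da; case: (UBb a Da) => // ab; subst a.
  have [X0 FX0] := F0; have [a0 _ a0X] := FImg X0 FX0; subst X0.
  have nsucc : forall c, ~ is_succ lt c b.
    move=> c [cb cb2]; apply: (bmin c) cb => a Da.
    case: (tot a c) => [|[|ca]]; [by left|by right|].
    by exfalso; apply: cb2; exists a; split => //; apply: ltD.
  exists b => //; have [_ _ Slim] := ss b.
  rewrite Slim; [|by exists a0; apply: ltD|by []].
  apply/seteqP; split.
  + move=> x [c cb Scx].
    have [nUBc|] := pselect (UB c); first by exfalso; exact: bmin nUBc cb.
    move=> /existsNP[a /not_implyP[Da nac]].
    case: (tot a c) => [ac|[ac|ca]].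
    - by exfalso; apply: nac; left.
    - by exfalso; apply: nac; right.
    by exists (Ssq a) => //; exact: (mono a c ca x Scx).
  + move=> x [X FX Xx]; have [a _ Xa] := FImg X FX; subst X.
    by exists a => //; apply: ltD.
- move=> X [a _ <-] neq.
  have atop : a <> top by move=> e; apply: neq; rewrite e Stop.
  have [s sa] := succ_ex a atop.
  by rewrite -(Sstep a atop s sa); apply: layers.
Qed.

End Comp.

End Comp.
Import Comp.

Module Main1.
Set Implicit Arguments.
Unset Strict Implicit.

Section IdealFacts.
Variables (K : fieldType) (A : algType K) (S : set A).
Lemma ideal0 J : is_ideal S J -> J 0. Proof. by case. Qed.
Lemma idealD J x y : is_ideal S J -> J x -> J y -> J (x + y).
Proof. by case=> _ _ h _ _; apply: h. Qed.
Lemma idealN J x : is_ideal S J -> J x -> J (- x).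
Proof. by case=> _ _ _ h _; apply: h. Qed.
Lemma idealB J x y : is_ideal S J -> J x -> J y -> J (x - y).
Proof. by move=> iJ Jx Jy; apply: idealD => //; apply: idealN. Qed.
Lemma idealMl J s x : is_ideal S J -> S s -> J x -> J (s * x).
Proof. by case=> _ _ _ _ h Ss Jx; case: (h s x Ss Jx). Qed.
Lemma idealMr J s x : is_ideal S J -> S s -> J x -> J (x * s).
Proof. by case=> _ _ _ _ h Ss Jx; case: (h s x Ss Jx). Qed.
Lemma idealS J x : is_ideal S J -> J x -> S x.
Proof. by case=> h _ _ _ _; apply: h. Qed.
Lemma idealZ J c x : is_ideal S J -> S (c *: 1) -> J x -> J (c *: x).
Proof. by move=> iJ S1 Jx; rewrite -[x]mul1r scalerAl; apply: idealMl. Qed.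
End IdealFacts.

Section Main1.
Variables (K : fieldType) (I : pointedType) (R : I -> algType K).
Local Notation P := (dprod R).

Lemma dpext (x y : P) : (forall i, x i = y i) -> x = y.
Proof. exact: functional_extensionality_dep. Qed.

Lemma addE (x y : P) i : (x + y) i = x i + y i. Proof. by []. Qed.
Lemma mulE (x y : P) i : (x * y) i = x i * y i. Proof. by []. Qed.
Lemma scaleE k (x : P) i : (k *: x) i = k *: x i. Proof. by []. Qed.
Lemma oneE i : (1 : P) i = 1. Proof. by []. Qed.
Lemma zeroE i : (0 : P) i = 0. Proof. by []. Qed.
Lemma oppE (x : P) i : (- x) i = - x i. Proof. by []. Qed.
Lemma subE (x y : P) i : (x - y) i = x i - y i. Proof. by []. Qed.
Definition dpE := (addE, mulE, scaleE, oneE, zeroE, oppE).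

Definition supp (x : P) := [set i | x i != 0].
Definition fs (x : P) := finite_set (supp x).

Lemma fs_sub x y : supp x `<=` supp y -> fs y -> fs x.
Proof. exact: sub_finite_set. Qed.
Lemma fs0 : fs 0.
Proof. by apply: (@sub_finite_set _ _ set0) => // i; rewrite /supp /= eqxx. Qed.
Lemma fsD x y : fs x -> fs y -> fs (x + y).
Proof.
move=> fx fy; apply: (@sub_finite_set _ _ (supp x `|` supp y)).
  move=> i; rewrite /supp /= addE => nz.
  case: (eqVneq (x i) 0) => [x0|x0]; last by left.
  by right; move: nz; rewrite x0 add0r.
by rewrite finite_setU.
Qed.
Lemma fsN x : fs x -> fs (- x).
Proof. by apply: fs_sub => i; rewrite /supp /= oppE oppr_eq0. Qed.
Lemma fsB x y : fs x -> fs y -> fs (x - y).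
Proof. by move=> fx fy; apply: fsD => //; apply: fsN. Qed.
Lemma fsMl x y : fs x -> fs (x * y).
Proof.
apply: fs_sub => i; rewrite /supp /= mulE; apply: contra_neq => ->; by rewrite mul0r.
Qed.
Lemma fsMr x y : fs y -> fs (x * y).
Proof.
apply: fs_sub => i; rewrite /supp /= mulE; apply: contra_neq => ->; by rewrite mulr0.
Qed.
Lemma fsZ c x : fs x -> fs (c *: x).
Proof.
apply: fs_sub => i; rewrite /supp /= scaleE; apply: contra_neq => ->; by rewrite scaler0.
Qed.

Definition Rk := Rkappa R.

Lemma RkP x : Rk x <-> exists k, fs (x - k *: 1).
Proof.
split=> [[k [y [fy ->]]]|[k fk]]; first by exists k; rewrite addrK.
by exists k, (x - k *: 1); split => //; rewrite subrK.
Qed.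

Definition sc (x : P) : K := xget 0 [set k | fs (x - k *: 1)].

Hypothesis inf : infinite_set [set: I].

Lemma sc_uniq x k k' : fs (x - k *: 1) -> fs (x - k' *: 1) -> k = k'.
Proof.
move=> fk fk'; have := fsB fk' fk.
have -> : x - k' *: 1 - (x - k *: 1) = (k - k') *: (1 : P).
  by rewrite scalerBl opprB addrC addrA subrK.
apply: contraPeq => neq fin; apply: inf.
apply: sub_finite_set fin => i _; rewrite /supp /= scaleE oneE scaler_eq0 oner_eq0 orbF.
by rewrite subr_eq0.
Qed.

Lemma scP x : Rk x -> fs (x - sc x *: 1).
Proof. by move=> /RkP ex; apply: (xgetPex 0 ex). Qed.

Lemma sc_eq x k : fs (x - k *: 1) -> sc x = k.
Proof.
move=> fk; have Rx : Rk x by apply/RkP; exists k.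
exact: sc_uniq (scP Rx) fk.
Qed.

Lemma Rk_fs x k : fs (x - k *: 1) -> Rk x.
Proof. by move=> fk; apply/RkP; exists k. Qed.

Lemma Rk0 : Rk 0 /\ sc 0 = 0.
Proof.
have h : fs (0 - (0 : K) *: 1) by rewrite scale0r subr0; exact: fs0.
by split; [apply: Rk_fs h|apply: sc_eq h].
Qed.

Lemma RkC c : Rk (c *: 1) /\ sc (c *: 1) = c.
Proof.
have h : fs (c *: 1 - c *: 1) by rewrite subrr; exact: fs0.
by split; [apply: Rk_fs h|apply: sc_eq h].
Qed.

Lemma Rk1 : Rk 1 /\ sc 1 = 1.
Proof. by have := RkC 1; rewrite scale1r. Qed.

Lemma RkD x y : Rk x -> Rk y -> Rk (x + y) /\ sc (x + y) = sc x + sc y.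
Proof.
move=> /scP fx /scP fy.
have h : fs (x + y - (sc x + sc y) *: 1).
  by rewrite scalerDl opprD addrACA; apply: fsD.
split; [apply: Rk_fs h|apply: sc_eq h].
Qed.

Lemma RkN x : Rk x -> Rk (- x) /\ sc (- x) = - sc x.
Proof.
move=> /scP fx; have h : fs (- x - (- sc x) *: 1).
  by rewrite scaleNr -opprD; apply: fsN.
split; [apply: Rk_fs h|apply: sc_eq h].
Qed.

Lemma RkB x y : Rk x -> Rk y -> Rk (x - y) /\ sc (x - y) = sc x - sc y.
Proof.
move=> Rx Ry; have [RNy sNy] := RkN Ry; have [h1 h2] := RkD Rx RNy.
by split => //; rewrite h2 sNy.
Qed.

Lemma RkZ c x : Rk x -> Rk (c *: x) /\ sc (c *: x) = c * sc x.
Proof.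
move=> /scP fx; have h : fs (c *: x - (c * sc x) *: 1).
  by rewrite -scalerA -scalerBr; apply: fsZ.
split; [apply: Rk_fs h|apply: sc_eq h].
Qed.

Lemma RkM x y : Rk x -> Rk y -> Rk (x * y) /\ sc (x * y) = sc x * sc y.
Proof.
move=> /scP fx /scP fy; have h : fs (x * y - (sc x * sc y) *: 1).
  have -> : x * y - (sc x * sc y) *: 1 = (x - sc x *: 1) * y + sc x *: (y - sc y *: 1).
    rewrite mulrBl -scalerAl mul1r scalerBr scalerA.
    by rewrite addrA subrK.
  by apply: fsD; [apply: fsMl|apply: fsZ].
split; [apply: Rk_fs h|apply: sc_eq h].
Qed.

Lemma Rk_comp x i : Rk x -> ~ supp (x - sc x *: 1) i -> x i = sc x *: 1.
Proof.
move=> _; rewrite /supp /= => /negP/negPn/eqP; rewrite subE scaleE oneE.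
by move/eqP; rewrite subr_eq0 => /eqP.
Qed.

Definition iota (a : I) (r : R a) : P := @dfwith I R (fun i => 0) a r.

Lemma iota_in a (r : R a) : iota r a = r. Proof. exact: dfwith_in. Qed.
Lemma iota_out a (r : R a) i : a != i -> iota r i = 0. Proof. exact: dfwith_out. Qed.

Lemma fs_iota a (r : R a) : fs (iota r).
Proof.
apply: (@sub_finite_set _ _ [set a]) => // i; rewrite /supp /=.
by case: (eqVneq a i) => [<-//|ne]; rewrite iota_out // eqxx.
Qed.

Lemma Rk_iota a (r : R a) : Rk (iota r) /\ sc (iota r) = 0.
Proof.
have h : fs (iota r - 0 *: 1) by rewrite scale0r subr0; apply: fs_iota.
split; [apply: Rk_fs h|apply: sc_eq h].
Qed.

Lemma iotaD a (r s : R a) : iota (r + s) = iota r + iota s.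
Proof.
apply: dpext => i; rewrite addE; case: (eqVneq a i) => [<-|ne].
  by rewrite !iota_in.
by rewrite !iota_out // addr0.
Qed.

Lemma iota0 a : iota (0 : R a) = 0.
Proof.
apply: dpext => i; case: (eqVneq a i) => [<-|ne]; first by rewrite iota_in.
by rewrite iota_out.
Qed.

Lemma iota_mull a (r : R a) (x : P) : x * iota r = iota (x a * r).
Proof.
apply: dpext => i; rewrite mulE; case: (eqVneq a i) => [<-|ne].
  by rewrite !iota_in.
by rewrite !iota_out // mulr0.
Qed.

Lemma iota_mulr a (r : R a) (x : P) : iota r * x = iota (r * x a).
Proof.
apply: dpext => i; rewrite mulE; case: (eqVneq a i) => [<-|ne].
  by rewrite !iota_in.
by rewrite !iota_out // mul0r.
Qed.

Definition Psi (b : Prop) (X : forall i, set (R i)) : set P :=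
  [set x | [/\ Rk x, b \/ sc x = 0 & forall i, X i (x i)]].
Definition ideals (X : forall i, set (R i)) := forall i, is_ideal [set: R i] (X i).
Definition Aset (X : forall i, set (R i)) := [set i | ~ X i 1].

Lemma Psi_sub (b b' : Prop) X Y : (b -> b') -> (forall i, X i `<=` Y i) ->
  Psi b X `<=` Psi b' Y.
Proof.
move=> bb' XY x [Rx hb Xx]; rewrite /Psi /=; split => //.
- by case: hb => [h|h]; [left; apply: bb'|right].
- by move=> i; apply: XY.
Qed.

Lemma Psi_ideal b X : ideals X -> is_ideal Rk (Psi b X).
Proof.
move=> iX; split.
- by move=> x [].
- split; [exact: Rk0.1|right; exact: Rk0.2|by move=> i; apply: ideal0 (iX i)].
- move=> x y [Rx bx Xx] [Ry by_ Xy]; have [RD sD] := RkD Rx Ry; split => //.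
    case: bx => [hb|sx]; first by left.
    case: by_ => [hb|sy]; first by left.
    by right; rewrite sD sx sy addr0.
  by move=> i; rewrite addE; apply: idealD (iX i) _ _.
- move=> x [Rx bx Xx]; have [RN sN] := RkN Rx; split => //.
    by case: bx => [hb|sx]; [left|right; rewrite sN sx oppr0].
  by move=> i; rewrite oppE; apply: idealN (iX i) _.
- move=> s x Rs [Rx bx Xx]; have [RM1 sM1] := RkM Rs Rx; have [RM2 sM2] := RkM Rx Rs.
  split; split => //.
  + by case: bx => [hb|sx]; [left|right; rewrite sM1 sx mulr0].
  + by move=> i; rewrite mulE; apply: idealMl (iX i) _ _.
  + by case: bx => [hb|sx]; [left|right; rewrite sM2 sx mul0r].
  + by move=> i; rewrite mulE; apply: idealMr (iX i) _ _.
Qed.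

Lemma iota_Psi b X a (r : R a) : ideals X -> Psi b X (iota r) <-> X a r.
Proof.
move=> iX; split; first by case=> _ _ /(_ a); rewrite iota_in.
move=> Xr; have [R1 s1] := Rk_iota r; split => //; first by right.
move=> i; case: (eqVneq a i) => [<-|ne]; first by rewrite iota_in.
by rewrite iota_out //; apply: ideal0 (iX i).
Qed.

End Main1.

End Main1.
Import Main1.

Module Main2.
Set Implicit Arguments.
Unset Strict Implicit.

Lemma idealI (K : fieldType) (A : algType K) (S J1 J2 : set A) :
  is_ideal S J1 -> is_ideal S J2 -> is_ideal S (J1 `&` J2).
Proof.
move=> i1 i2; split.
- by move=> x [/(idealS i1)].
- by split; [exact: ideal0 i1|exact: ideal0 i2].
- by move=> x y [? ?] [? ?]; split; [exact: idealD i1 _ _|exact: idealD i2 _ _].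
- by move=> x [? ?]; split; [exact: idealN i1 _|exact: idealN i2 _].
- move=> s x Ss [? ?]; split; split.
  + exact: idealMl i1 _ _.
  + exact: idealMl i2 _ _.
  + exact: idealMr i1 _ _.
  + exact: idealMr i2 _ _.
Qed.

Section Main2.
Variables (K : fieldType) (I : pointedType) (R : I -> algType K).
Hypothesis inf : infinite_set [set: I].
Local Notation P := (dprod R).
Local Notation Rk := (@Rk K I R).
Local Notation sc := (@sc K I R).
Local Notation Psi := (@Psi K I R).
Local Notation stepR := (socle_step Rk).
Definition stepX (X : forall i, set (R i)) := fun i => socle_step [set: R i] (X i).
Definition dfw (X : forall i, set (R i)) a (M : set (R a)) :=
  @dfwith I (fun i => set (R i)) X a M.
Arguments dfw X {a} M j.

Lemma dfw_in X a (M : set (R a)) : dfw X M a = M. Proof. exact: dfwith_in. Qed.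
Lemma dfw_out X a (M : set (R a)) i : a != i -> dfw X M i = X i. Proof. exact: dfwith_out. Qed.

Lemma dfw_ideals X a (M : set (R a)) : ideals X -> is_ideal [set: R a] M ->
  ideals (dfw X M).
Proof.
move=> iX iM i; rewrite /dfw; case: dfwithP => // j _; exact: iX.
Qed.

Lemma dfw_sub X a (M : set (R a)) : X a `<=` M -> forall i, X i `<=` dfw X M i.
Proof. by move=> XM i; rewrite /dfw; case: dfwithP => // j _ x. Qed.

Lemma stepX_ideals X : ideals X -> ideals (stepX X).
Proof. by move=> iX i; apply: step_ideal (iX i) _ _. Qed.

Lemma iotaN a (r : R a) : iota (- r) = - iota r.
Proof.
apply: dpext => i; rewrite oppE; case: (eqVneq a i) => [<-|ne].
  by rewrite !iota_in.
by rewrite !iota_out // oppr0.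
Qed.

Lemma iotaB a (r s : R a) : iota (r - s) = iota r - iota s.
Proof. by rewrite iotaD iotaN. Qed.

Lemma Rk_ideal_slice a (N : set P) : is_ideal Rk N ->
  is_ideal [set: R a] [set r | N (iota r)].
Proof.
move=> iN; rewrite /mkset; split => //.
- by rewrite /= iota0; apply: ideal0 iN.
- move=> r s Nr Ns; rewrite /mkset /= iotaD. exact: (idealD iN Nr Ns).
- move=> r Nr; rewrite /mkset /= iotaN; exact: (idealN iN Nr).
- move=> s r _ Nr; split; rewrite /mkset /=.
  + have := idealMl iN (Rk_iota inf s).1 Nr; by rewrite iota_mull iota_in.
  + have := idealMr iN (Rk_iota inf s).1 Nr; by rewrite iota_mulr iota_in.
Qed.

Lemma iota_mem (N : set P) a (x : P) : is_ideal Rk N -> N x -> N (iota (x a)).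
Proof.
move=> iN Nx; have := idealMr iN (Rk_iota inf (1 : R a)).1 Nx.
by rewrite iota_mull mulr1.
Qed.

Lemma Psi_split b X a (Y : set (R a)) x : ideals X ->
  Psi b (dfw X Y) x -> Psi b X (x - iota (x a)).
Proof.
move=> iX [Rx bx Xx]; have [RB sB] := RkB inf Rx (Rk_iota inf (x a)).1.
split => //.
  by case: bx => [h|h]; [left|right; rewrite sB h (Rk_iota inf _).2 subr0].
move=> i; rewrite subE; case: (eqVneq a i) => [<-|ne].
  by rewrite iota_in subrr; apply: ideal0 (iX a).
by rewrite iota_out // subr0 -(dfw_out X Y ne); apply: Xx.
Qed.

Lemma iota_Psi_dfw b X a (Y : set (R a)) (r : R a) : ideals X ->
  is_ideal [set: R a] Y -> Psi b (dfw X Y) (iota r) <-> Y r.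
Proof.
move=> iX iY; by rewrite (iota_Psi inf _ _ (dfw_ideals iX iY)) (dfw_in X Y).
Qed.

Lemma Psi_dfw_sub b X a (Y : set (R a)) (N : set P) : ideals X ->
  is_ideal Rk N -> Psi b X `<=` N -> (forall r, Y r -> N (iota r)) ->
  Psi b (dfw X Y) `<=` N.
Proof.
move=> iX iN XN YN x Px.
have -> : x = iota (x a) + (x - iota (x a)) by rewrite addrC subrK.
apply: idealD iN _ _; last by apply: XN; apply: Psi_split Px.
apply: YN; case: Px => _ _ /(_ a); by rewrite dfw_in.
Qed.

Lemma lift b X a (M : set (R a)) : ideals X ->
  minimal_over [set: R a] (X a) M -> minimal_over Rk (Psi b X) (Psi b (dfw X M)).
Proof.
move=> iX [iM [XM nMX] Mmin].
have iD := dfw_ideals iX iM.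
split; first exact: (Psi_ideal inf _ iD).
  split; first exact: (Psi_sub (fun h => h) (dfw_sub XM)).
  move=> sub; apply: nMX => r Mr.
  have := sub (iota r); rewrite (iota_Psi_dfw _ _ iX iM) (iota_Psi inf _ _ iX); exact.
move=> N iN PN NP.
set Na := [set r : R a | N (iota r)].
have iNa : is_ideal [set: R a] Na by apply: Rk_ideal_slice.
have XNa : X a `<=` Na by move=> r Xr; apply: PN; rewrite /= (iota_Psi inf _ _ iX).
have NaM : Na `<=` M.
  by move=> r /NP; rewrite (iota_Psi_dfw _ _ iX iM).
case: (Mmin Na iNa XNa NaM) => [eNa|eNa]; [left|right]; apply/seteqP; split => //.
- move=> x Nx; have [Rx bx Xx] := NP x Nx; split => // i.
  case: (eqVneq a i) => [<-|ne]; last by rewrite -(dfw_out X M ne).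
  have : Na (x a) by exact: (iota_mem a iN Nx).
  by rewrite eNa.
- apply: Psi_dfw_sub => // r Mr; by have : Na r by rewrite eNa.
Qed.

Lemma down b X (M : set P) : ideals X ->
  minimal_over Rk (Psi b X) M ->
  M `<=` Psi (b \/ finite_set (Aset X)) (stepX X).
Proof.
move=> iX mM; have [iM [PM nMP] Mmin] := mM.
have [z Mz nPz] : exists2 z, M z & ~ Psi b X z.
  apply: contrapT => h; apply: nMP => z Mz; apply: contrapT => nz; apply: h.
  by exists z.
have Rz : Rk z := idealS iM Mz.
have [[a nXa]|allX] := pselect (exists a, ~ X a (z a)).
- set Ma := [set r : R a | M (iota r)].
  have iMa : is_ideal [set: R a] Ma by apply: Rk_ideal_slice.
  have XMa : X a `<=` Ma by move=> r Xr; apply: PM; rewrite /= (iota_Psi inf _ _ iX).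
  have key : forall N', is_ideal [set: R a] N' -> N' `<=` Ma ->
      Psi b (dfw X N') `<=` M.
    move=> N' iN' N'Ma; apply: Psi_dfw_sub => // r /N'Ma //.
  have zMa : Ma (z a) by exact: (iota_mem a iM Mz).
  have mMa : minimal_over [set: R a] (X a) Ma.
    split => //; first by split => // h; apply: nXa; apply: h.
    move=> N' iN' XN' N'Ma.
    have iD := dfw_ideals iX iN'.
    case: (Mmin _ (Psi_ideal inf b iD) (Psi_sub (fun h => h) (dfw_sub XN')) (key N' iN' N'Ma)).
    + move=> e; left; apply/seteqP; split => // r N'r.
      have : Psi b (dfw X N') (iota r) by rewrite (iota_Psi_dfw _ _ iX iN').
      by rewrite e (iota_Psi inf _ _ iX).
    + move=> e; right; apply/seteqP; split => // r Mar.
      have : M (iota r) by [].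
      by rewrite -e (iota_Psi_dfw _ _ iX iN').
  have iDa := dfw_ideals iX iMa.
  case: (Mmin _ (Psi_ideal inf b iDa) (Psi_sub (fun h => h) (dfw_sub XMa)) (key Ma iMa (fun _ h => h))).
    move=> e; exfalso; apply: nXa.
    have : Psi b (dfw X Ma) (iota (z a)) by rewrite (iota_Psi_dfw _ _ iX iMa).
    by rewrite e (iota_Psi inf _ _ iX).
  move=> <-; apply: Psi_sub; first by move=> h; left.
  move=> i; rewrite /dfw; case: dfwithP.
    by move=> r /(step_min (iX a) mMa).
  by move=> j _; apply: step_infl.
- have Xz : forall i, X i (z i) by move=> i; apply: contrapT => h; apply: allX; exists i.
  have nb : ~ b by move=> hb; apply: nPz; split => //; left.
  have sz : sc z != 0 by apply/eqP => h; apply: nPz; split => //; right.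
  have iT := Psi_ideal inf True iX.
  have eM : M `&` Psi True X = M.
    case: (Mmin _ (idealI iM iT)).
    + move=> x Px; split; first exact: PM.
      exact: (Psi_sub (fun _ => Logic.I) (fun i x h => h) Px).
    + by move=> x [].
    + move=> e; exfalso; apply: nPz; rewrite -e; split => //; split => //; by left.
    + by [].
  have finA : finite_set (Aset X).
    apply: sub_finite_set (scP Rz) => i Ai; apply: contrapT => ns.
    apply: Ai; have := Xz i; rewrite (Rk_comp Rz ns) => h.
    have := idealZ (c := (sc z)^-1) (iX i) Logic.I h.
    by rewrite scalerA mulVf // scale1r.
  move=> x; rewrite -eM => -[_]; apply: Psi_sub; first by move=> _; right.
  by move=> i; apply: step_infl.
Qed.

Definition uvec (X : forall i, set (R i)) : P :=
  fun i => if pselect (X i 1) then 1 else 0.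

Lemma uvec_Psi X : ideals X -> finite_set (Aset X) ->
  Psi True X (uvec X) /\ sc (uvec X) = 1.
Proof.
move=> iX fin.
have h : fs (uvec X - 1 *: 1).
  apply: sub_finite_set fin => i; rewrite /supp /mkset subE scaleE oneE scale1r /uvec.
  destruct (pselect (X i 1)) as [p|nX]; last by move=> _; exact: nX.
  by rewrite subrr eqxx.
have Ru := Rk_fs h; have su := sc_eq inf h.
split => //; split => //; first by left.
move=> i; rewrite /uvec; destruct (pselect (X i 1)) => //; exact: ideal0 (iX i).
Qed.

Lemma full_min b X : ideals X -> finite_set (Aset X) -> ~ b ->
  minimal_over Rk (Psi b X) (Psi True X).
Proof.
move=> iX fin nb; have [Pu su] := uvec_Psi iX fin.
split; first exact: (Psi_ideal inf _ iX).
  split; first exact: (Psi_sub (fun _ => Logic.I) (fun i x h => h)).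
  move=> /(_ _ Pu) [_ [//|]]; rewrite su => /eqP; by rewrite oner_eq0.
move=> N iN PN NT.
have [NP|] := pselect (N `<=` Psi b X).
  by left; apply/seteqP; split.
move=> /existsNP[z /not_implyP[Nz nPz]]; right; apply/seteqP; split => //.
have [Rz _ Xz] := NT z Nz.
have sz : sc z != 0 by apply/eqP => h; apply: nPz; split => //; right.
move=> w [Rw _ Xw].
set c := sc w / sc z.
have -> : w = c *: z + (w - c *: z) by rewrite addrC subrK.
refine (idealD iN _ _).
  exact: (idealZ iN (RkC R inf c).1 Nz).
apply: PN; have [RZ sZ] := RkZ inf c Rz; have [RB sB] := RkB inf Rw RZ.
split => //.
  by right; rewrite sB sZ /c divfK // subrr.
move=> i; rewrite subE scaleE; apply: idealB (iX i) _ _ => //.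
exact: idealZ (iX i) Logic.I (Xz i).
Qed.

End Main2.

End Main2.
Import Main2.

Module Main3.
Set Implicit Arguments.
Unset Strict Implicit.
Arguments stepX [K I R] X i _.

Section Main3.
Variables (K : fieldType) (I : pointedType) (R : I -> algType K).
Hypothesis inf : infinite_set [set: I].
Local Notation P := (dprod R).
Local Notation Rk := (@Rk K I R).
Local Notation sc := (@sc K I R).
Local Notation Psi := (@Psi K I R).
Local Notation stepR := (socle_step Rk).

Lemma Rk_step_ideal J : is_ideal Rk J -> is_ideal Rk (stepR J).
Proof.
move=> iJ; apply: (step_ideal iJ (Rk0 R inf).1).
by move=> x y Rx Ry; exact: (RkD inf Rx Ry).1.
Qed.

Lemma up b X : ideals X -> (b -> finite_set (Aset X)) ->
  Psi (b \/ finite_set (Aset X)) (stepX X) `<=` stepR (Psi b X).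
Proof.
move=> iX bfin.
have iP := Psi_ideal inf b iX.
have iS := Rk_step_ideal iP.
have iSX := stepX_ideals iX.
have comp_lift : forall a (r : R a), stepX X a r -> stepR (Psi b X) (iota r).
  move=> a r; apply: (step_ind (Q := fun r => stepR (Psi b X) (iota r))).
  - by move=> r1 r2 h1 h2; rewrite iotaD; exact: (step_add iP h1 h2).
  - by move=> r1 Xr; apply: step_infl; rewrite (iota_Psi inf _ _ iX).
  - move=> M mM m Mm; apply: (step_min iP (lift inf b iX mM)).
    by rewrite (iota_Psi_dfw inf _ _ iX (let: And3 i _ _ := mM in i)).
have fin_part : forall (s : seq I) x, Rk x -> sc x = 0 -> (forall i, stepX X i (x i)) ->
    supp x `<=` [set` s] -> stepR (Psi b X) x.
  move=> s; elim: s => [|a s IH] x Rx sx Sx sub.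
    have -> : x = 0.
      apply: dpext => i; apply/eqP; apply: contraT => nz.
      by have := sub i nz.
    exact: ideal0 iS.
  have -> : x = iota (x a) + (x - iota (x a)) by rewrite addrC subrK.
  apply: (step_add iP (comp_lift a _ (Sx a))).
  have [RB sB] := RkB inf Rx (Rk_iota inf (x a)).1.
  apply: IH => //.
  - by rewrite sB sx (Rk_iota inf _).2 subrr.
  - move=> i; rewrite subE; case: (eqVneq a i) => [<-|ne].
      by rewrite iota_in subrr; exact: ideal0 (iSX a).
    by rewrite iota_out // subr0.
  - move=> i; rewrite /supp /mkset subE => nz.
    case: (eqVneq a i) => [ai|ne].
      by move: nz; rewrite -ai iota_in subrr eqxx.
    move: nz; rewrite iota_out // subr0 => nz.
    have := sub i nz; rewrite /= in_cons => /orP[/eqP ia|//].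
    by move: ne; rewrite ia eqxx.
move=> x [Rx bx Sx].
have [s0|sn0] := eqVneq (sc x) 0.
  have fx : fs x by have := scP Rx; rewrite s0 scale0r subr0.
  have [s es] := (finite_seqP _).1 fx.
  by apply: (fin_part s) => //; rewrite es.
have fin : finite_set (Aset X).
  by case: bx => [[/bfin|]|/eqP] //; rewrite (negbTE sn0).
have [Pu su] := uvec_Psi inf iX fin.
have [Ru _ _] := Pu.
have -> : x = x * uvec X + x * (1 - uvec X) by rewrite mulrBr mulr1 addrC subrK.
apply: (step_add iP).
  have PT : Psi True X `<=` stepR (Psi b X).
    have [hb|nb] := pselect b.
      move=> y Py; apply: step_infl.
      exact: (Psi_sub (fun _ => hb) (fun i x h => h) Py).
    by move=> y Py; apply: (step_min iP (full_min inf iX fin nb)).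
  apply: PT; exact: (idealMl (Psi_ideal inf True iX) Rx Pu).
have [R1u s1u] := RkB inf (Rk1 R inf).1 Ru.
have [RM sM] := RkM inf Rx R1u.
have fx : fs (x * (1 - uvec X)).
  by have := scP RM; rewrite sM s1u (Rk1 R inf).2 su subrr mulr0 scale0r subr0.
have [s es] := (finite_seqP _).1 fx.
apply: (fin_part s) => //.
- by rewrite sM s1u (Rk1 R inf).2 su subrr mulr0.
- move=> i; rewrite mulE subE oneE /uvec.
  destruct (pselect (X i 1)) as [p|np].
    by rewrite subrr mulr0; exact: ideal0 (iSX i).
  by rewrite subr0 mulr1.
- by rewrite es.
Qed.

Lemma step_eq b X : ideals X -> (b -> finite_set (Aset X)) ->
  stepR (Psi b X) = Psi (b \/ finite_set (Aset X)) (stepX X).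
Proof.
move=> iX bfin; apply/seteqP; split; last exact: up.
apply: step_ind.
- move=> x y; exact: idealD (Psi_ideal inf _ (stepX_ideals iX)).
- move=> x Px; apply: (Psi_sub (fun h => or_introl h) _ Px).
  by move=> i r Xr; apply: step_infl.
- move=> M mM; exact: (down inf iX mM).
Qed.

End Main3.

End Main3.
Import Main3.

Module Layer.
Set Implicit Arguments.
Unset Strict Implicit.
Arguments stepX [K I R] X i _.

Definition LP (K : fieldType) (A : algType K) (Jb Ja : set A) (Lam : Type)
  (f : A -> Lam -> K) : Prop :=
    (forall x, Jb x -> finsupp (f x)) /\
    (forall x y, Jb x -> Jb y -> f (x + y) = (fun l => f x l + f y l)) /\
    (forall (k : K) x, Jb x -> f (k *: x) = (fun l => k * f x l)) /\
    (forall x y, Jb x -> Jb y -> f (x * y) = (fun l => f x l * f y l)) /\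
    (forall g : Lam -> K, finsupp g -> exists2 x, Jb x & f x = g) /\
    (forall x, Jb x -> (f x = (fun _ => 0) <-> Ja x)).

Lemma layer_isoP (K : fieldType) (A : algType K) (Jb Ja : set A) :
  layer_iso Jb Ja <-> exists Lam : Type, inhabited Lam /\ exists f : A -> Lam -> K, LP Jb Ja f.
Proof. by []. Qed.

Lemma SomeNone (T : Type) (a : T) (Q : Prop) : Some a = None -> Q.
Proof. by []. Qed.

Section Layer.
Variables (K : fieldType) (I : pointedType) (R : I -> algType K).
Hypothesis inf : infinite_set [set: I].
Local Notation P := (dprod R).
Local Notation Rk := (@Rk K I R).
Local Notation sc := (@sc K I R).
Local Notation Psi := (@Psi K I R).
Local Notation stepR := (socle_step Rk).

Lemma comp_data (Y : forall i, set (R i)) i : ideals Y ->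
  (Y i <> [set: R i] -> layer_iso (stepX Y i) (Y i)) ->
  exists (Lam : Type) (f : R i -> Lam -> K), LP (stepX Y i) (Y i) f.
Proof.
move=> iY hl.
have [eT|neT] := pselect (Y i = [set: R i]); last first.
  by have [Lam [_ [f h]]] := hl neT; exists Lam, f.
exists Empty_set, (fun _ (v : Empty_set) => match v with end : K).
split.
  by move=> x _; apply: (@sub_finite_set _ _ set0) => // -[].
split; first by move=> x y _ _; apply: funext => -[].
split; first by move=> k x _; apply: funext => -[].
split; first by move=> x y _ _; apply: funext => -[].
split.
  move=> g _; exists 0; last by apply: funext => -[].
  by apply: step_infl; rewrite eT.
by move=> x _; split => // _; [rewrite eT|apply: funext => -[]].
Qed.

Lemma layer_Psi (c : Prop) (Y : forall i, set (R i)) : ideals Y ->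
  (c -> finite_set (Aset Y)) ->
  (forall i, Y i <> [set: R i] -> layer_iso (stepX Y i) (Y i)) ->
  (exists x, Psi (c \/ finite_set (Aset Y)) (stepX Y) x /\ ~ Psi c Y x) ->
  layer_iso (Psi (c \/ finite_set (Aset Y)) (stepX Y)) (Psi c Y).
Proof.
move=> iY cfin hl [x0 [Jx0 nJx0]].
set c' := c \/ finite_set (Aset Y).
have iSY := stepX_ideals iY.
have dat : forall i, {p : {Lam : Type & R i -> Lam -> K} |
    LP (stepX Y i) (Y i) (projT2 p)}.
  move=> i; apply: cid; have [Lam [f h]] := comp_data iY (hl i).
  by exists (existT _ Lam f).
pose Lam i := projT1 (proj1_sig (dat i)).
pose f i : R i -> Lam i -> K := projT2 (proj1_sig (dat i)).
have LPi : forall i, LP (stepX Y i) (Y i) (f i) := fun i => proj2_sig (dat i).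
pose extra := ~ c /\ finite_set (Aset Y).
pose L := {o : option {i : I & Lam i} | o = None -> extra}.
pose F (x : P) (o : L) : K :=
  match sval o with Some (existT i l) => f i (x i) l | None => sc x end.
have f0 : forall i r, Y i r -> f i r = (fun _ => 0).
  move=> i r Yr; have [_ [_ [_ [_ [_ ker]]]]] := LPi i.
  by apply/ker => //; apply: step_infl.
have Jcomp : forall x, Psi c' (stepX Y) x -> forall i, stepX Y i (x i).
  by move=> x [].
have kerF : forall x, Psi c' (stepX Y) x -> (F x = (fun _ => 0) <-> Psi c Y x).
  move=> x Jx; have [Rx bx Sx] := Jx; split.
  - move=> Fx0.
    have Yx : forall i, Y i (x i).
      move=> i; have [_ [_ [_ [_ [_ ker]]]]] := LPi i; apply/ker; first exact: Sx.
      apply: funext => l.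
      exact: (congr1 (fun G => G (exist _ (Some (existT _ i l)) (@SomeNone _ _ extra))) Fx0).
    split => //.
    have [hc|nc] := pselect c; first by left.
    right; have [fA|nfA] := pselect (finite_set (Aset Y)).
      have e : extra by split.
      exact: (congr1 (fun G => G (exist _ None (fun _ => e))) Fx0).
    by case: bx => // -[].
  - move=> [_ bcx Yx]; apply: funext => -[[[i l]|] h] /=.
      by rewrite /F /= (f0 i _ (Yx i)).
    rewrite /F /=; have [nc _] := h erefl.
    by case: bcx.
have Fadd : forall x y, Psi c' (stepX Y) x -> Psi c' (stepX Y) y ->
    F (x + y) = (fun o => F x o + F y o).
  move=> x y Jx Jy; have [Rx _ _] := Jx; have [Ry _ _] := Jy.
  apply: funext => -[[[i l]|] h]; rewrite /F /=.
    have [_ [add _]] := LPi i.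
    by rewrite (add _ _ (Jcomp _ Jx i) (Jcomp _ Jy i)).
  exact: (RkD inf Rx Ry).2.
have Fscale : forall (k : K) x, Psi c' (stepX Y) x ->
    F (k *: x) = (fun o => k * F x o).
  move=> k x Jx; have [Rx _ _] := Jx.
  apply: funext => -[[[i l]|] h]; rewrite /F /=.
    have [_ [_ [sca _]]] := LPi i.
    by rewrite (sca _ _ (Jcomp _ Jx i)).
  exact: (RkZ inf k Rx).2.
have Fmul : forall x y, Psi c' (stepX Y) x -> Psi c' (stepX Y) y ->
    F (x * y) = (fun o => F x o * F y o).
  move=> x y Jx Jy; have [Rx _ _] := Jx; have [Ry _ _] := Jy.
  apply: funext => -[[[i l]|] h]; rewrite /F /=.
    have [_ [_ [_ [mul _]]]] := LPi i.
    by rewrite (mul _ _ (Jcomp _ Jx i) (Jcomp _ Jy i)).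
  exact: (RkM inf Rx Ry).2.
have Fsupp : forall x, Psi c' (stepX Y) x -> finsupp (F x).
  move=> x Jx; have [Rx bx Sx] := Jx.
  set k := sc x.
  set B := [set i | ~ Y i (x i)].
  have finB : finite_set B.
    apply: (@sub_finite_set _ _ (supp (x - k *: 1) `|` [set i | k != 0 /\ Aset Y i])).
      move=> i nY; have [si|nsi] := pselect (supp (x - k *: 1) i); first by left.
      right; have xi := Rk_comp Rx nsi.
      split.
        apply/eqP => k0; apply: nY; rewrite xi -/k k0 scale0r; exact: ideal0 (iY i).
      move=> Y1; apply: nY; rewrite xi; exact: idealZ (iY i) Logic.I Y1.
    rewrite finite_setU; split; first exact: scP Rx.
    have [k0|kn0] := eqVneq k 0.
      by apply: (@sub_finite_set _ _ set0) => // i [] /eqP.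
    have fA : finite_set (Aset Y).
      case: bx => [[/cfin|]|] //; by move/eqP: kn0.
    by apply: sub_finite_set fA => i [].
  pose T := Some @` (\bigcup_(i in B)
     (fun l => existT (fun i => Lam i) i l) @` [set l | f i (x i) l != 0]) `|` [set None].
  have finT : finite_set T.
    rewrite finite_setU; split => //.
    apply: finite_image; apply: bigcup_finite => // i _.
    apply: finite_image; have [fsu _] := LPi i; exact: fsu _ (Sx i).
  apply: (@sub_finite_set _ _ (sval @^-1` T)).
    move=> [[[i l]|] h] nz; rewrite /preimage /mkset /=.
      left; exists (existT _ i l) => //.
      exists i; last by exists l.
      move=> Yx; move: nz; by rewrite /mkset /F /= (f0 i _ Yx) eqxx.
    by right.
  apply: finite_preimage finT => -[o1 p1] [o2 p2] _ _ /= e.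
  exact: eq_exist.
have Fsurj : forall g : L -> K, finsupp g -> exists2 x, Psi c' (stepX Y) x & F x = g.
  move=> g fg.
  pose mk i l : L := exist _ (Some (existT _ i l)) (@SomeNone _ _ extra).
  pose gi i : Lam i -> K := fun l => g (mk i l).
  have fgi : forall i, finsupp (gi i).
    move=> i; apply: (@sub_finite_set _ _ (mk i @^-1` [set o | g o != 0])) => //.
    apply: finite_preimage fg => l1 l2 _ _ e.
    have := congr1 sval e => /= -[] e2.
    exact: (inj_pair2_eq_dec _ (fun a b => decP eqP) _ _ _ _ e2).
  pose pre : P := fun i => if pselect (gi i = fun _ => 0) then 0
     else xget 0 [set r | stepX Y i r /\ f i r = gi i].
  have preP : forall i, stepX Y i (pre i) /\ f i (pre i) = gi i.
    move=> i; rewrite /pre; destruct (pselect (gi i = fun _ => 0)) as [e|ne].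
      split; first exact: ideal0 (iSY i).
      rewrite /= e; apply: f0; exact: ideal0 (iY i).
    have [_ [_ [_ [_ [sur _]]]]] := LPi i.
    have [r Sr fr] := sur _ (fgi i).
    have := xgetPex 0 (P := [set r | stepX Y i r /\ f i r = gi i]) (ex_intro _ r (conj Sr fr)).
    move=> hx; exact: hx.
  have fpre : fs pre.
    pose proj (o : L) : I := match sval o with Some (existT i _) => i | None => point end.
    apply: (@sub_finite_set _ _ (proj @` [set o | g o != 0])); last exact: finite_image.
    move=> i; rewrite /supp /mkset /pre.
    destruct (pselect (gi i = fun _ => 0)) as [e|ne]; first by rewrite eqxx.
    move=> _; have : ~ forall l, gi i l = 0 by move=> h; apply: ne; apply: funext.
    move=> /existsNP[l gl].
    by exists (mk i l) => //; apply/eqP.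
  pose kk : K := if pselect extra is left e then g (exist _ None (fun _ => e)) else 0.
  pose xs : P := pre + kk *: uvec Y.
  have kk_extra : kk != 0 -> extra.
    by rewrite /kk; destruct (pselect extra) => //; rewrite eqxx.
  have fxs : fs (xs - kk *: 1).
    have -> : xs - kk *: 1 = pre + kk *: (uvec Y - 1) by rewrite /xs scalerBr addrA.
    apply: fsD fpre _.
    have [k0|kn0] := eqVneq kk 0; first by rewrite k0 scale0r; exact: fs0.
    have [_ fA] := kk_extra kn0.
    have [Pu su] := uvec_Psi inf iY fA; have [Ru _ _] := Pu.
    by apply: fsZ; have := scP Ru; rewrite su scale1r.
  have sxs : sc xs = kk := sc_eq inf fxs.
  have Yu : forall i, Y i (uvec Y i).
    move=> i; rewrite /uvec; destruct (pselect (Y i 1)) => //; exact: ideal0 (iY i).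
  have Su : forall i, stepX Y i (kk *: uvec Y i).
    move=> i; apply: idealZ (iSY i) Logic.I _; apply: step_infl; exact: Yu.
  exists xs.
    split; first exact: Rk_fs fxs.
    - have [k0|kn0] := eqVneq kk 0; first by right; rewrite sxs.
      by left; right; exact: (kk_extra kn0).2.
    - move=> i; rewrite /xs addE; exact: idealD (iSY i) (preP i).1 (Su i).
  apply: funext => -[[[i l]|] h]; rewrite /F /=.
    have [_ [add [sca _]]] := LPi i.
    rewrite /xs addE scaleE (add _ _ (preP i).1 (Su i)) /=.
    rewrite (sca _ _ (step_infl _ (Yu i))) /= (preP i).2 (f0 i _ (Yu i)) mulr0 addr0.
    by rewrite /gi /mk; congr g; exact: eq_exist.
  rewrite sxs /kk; destruct (pselect extra) as [e'|ne].
    by congr g; exact: eq_exist.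
  by exfalso; exact: ne (h erefl).
have inh : inhabited L.
  apply: contrapT => nL; apply: nJx0; apply/(kerF _ Jx0); apply: funext => o.
  by exfalso; apply: nL; constructor; exact: o.
exists L; split => //; exists F.
split; first exact: Fsupp.
split; first exact: Fadd.
split; first exact: Fscale.
split; first exact: Fmul.
split; first exact: Fsurj.
exact: kerF.
Qed.

End Layer.

End Layer.
Import Layer.

Module Final.
Set Implicit Arguments.
Unset Strict Implicit.
Arguments stepX [K I R] X i _.

Lemma layer_strict (K : fieldType) (A : algType K) (Jb Ja : set A) :
  layer_iso Jb Ja -> exists x, Jb x /\ ~ Ja x.
Proof.
move=> [Lam [[l0] [f [_ [_ [_ [_ [sur ker]]]]]]]].
pose g : Lam -> K := fun l => if pselect (l = l0) then 1 else 0.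
have fg : finsupp g.
  apply: (@sub_finite_set _ _ [set l0]) => // l; rewrite /mkset /g.
  by destruct (pselect (l = l0)) => //; rewrite eqxx.
have [x Jx fx] := sur g fg; exists x; split => // Jax.
have := congr1 (fun G => G l0) ((ker x Jx).2 Jax); rewrite fx /g /=.
by destruct (pselect (l0 = l0)) => // /eqP; rewrite oner_eq0.
Qed.

Section Final.
Variables (K : fieldType) (I : pointedType) (R : I -> algType K).
Hypothesis inf : infinite_set [set: I].
Hypothesis H : forall i, in_frakR [set: R i].
Local Notation P := (dprod R).
Local Notation Rk := (@Rk K I R).
Local Notation sc := (@sc K I R).
Local Notation Psi := (@Psi K I R).
Local Notation stepR := (socle_step Rk).

Definition dat (i : I) : {Img | comp_ok Img} := cid (comp_facts (H i)).
Definition Img (i : I) : set (set (R i)) := proj1_sig (dat i).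
Arguments Img : clear implicits.
Definition okI (i : I) : comp_ok (Img i) := proj2_sig (dat i).

Let z : set P := [set 0].
Let infl : forall J, J `<=` stepR J := fun J => @step_infl _ _ Rk J.
Local Notation tower := (@Tower.tower P z stepR).

Definition Inv (J : set P) := exists (c : Prop) (Y : forall i, set (R i)),
  [/\ J = Psi c Y, forall i, Img i (Y i) & c -> finite_set (Aset Y)].

Lemma Img_ideals Y : (forall i, Img i (Y i)) -> ideals Y.
Proof. by move=> hY i; have [_ h _ _ _] := okI i; apply: h. Qed.

Lemma rep_slice c Y a : ideals Y -> [set r | Psi c Y (@iota _ _ R a r)] = Y a.
Proof.
by move=> iY; apply/seteqP; split => r; rewrite /mkset (iota_Psi inf _ _ iY).
Qed.

Lemma rep_flag c Y : ideals Y -> (c -> finite_set (Aset Y)) ->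
  (c <-> exists x, Psi c Y x /\ sc x != 0).
Proof.
move=> iY cfin; split.
  move=> hc; have [Pu su] := uvec_Psi inf iY (cfin hc); exists (uvec Y).
  split; last by rewrite su oner_eq0.
  by have [Ru _ Yu] := Pu; split => //; left.
move=> [x [[_ hx _] nz]]; case: hx => // e.
by rewrite e eqxx in nz.
Qed.

Lemma tower_inv : forall J, tower J -> Inv J.
Proof.
move=> Jt; elim=> [|J tJ [c [Y [-> hY cfin]]]|F F0 tF IH].
- exists False, (fun i => [set 0]); split => //.
  + apply/seteqP; split => x.
      move=> x0; have -> : x = 0 := x0; have [R0 s0] := Rk0 R inf.
      rewrite /Psi /mkset; split => //; first by right.
    move=> [_ _ h]; apply: dpext => i; exact: h i.
  + by move=> i; have [h _ _ _ _] := okI i.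
- have iY := Img_ideals hY.
  exists (c \/ finite_set (Aset Y)), (stepX Y); split.
  + exact (step_eq inf iY cfin).
  + by move=> i; have [_ _ h _ _] := okI i; apply: h.
  + move=> h; have fA : finite_set (Aset Y) by case: h => // /cfin.
    apply: sub_finite_set fA => i; rewrite /Aset /mkset => nS Y1; apply: nS.
    exact: step_infl.
- set U := \bigcup_(J in F) J.
  pose YU i : set (R i) := [set r | U (iota r)].
  pose cU := exists x, U x /\ sc x != 0.
  have repJ : forall J, F J -> exists c Y, [/\ J = Psi c Y, ideals Y,
      forall i, Img i (Y i) & c -> finite_set (Aset Y)].
    move=> J FJ; have [c [Y [eJ hY cfin]]] := IH J FJ.
    by exists c, Y; split => //; apply: Img_ideals.
  have iJ : forall J, F J -> is_ideal Rk J.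
    by move=> J FJ; have [c [Y [-> iY _ _]]] := repJ J FJ; apply: Psi_ideal.
  have YUimg : forall i, Img i (YU i).
    move=> i; pose Fi := [set Z : set (R i) | exists2 J, F J & Z = [set r | J (iota r)]].
    have -> : YU i = \bigcup_(Z in Fi) Z.
      apply/seteqP; split => r.
        by move=> [J FJ Jr]; exists [set r | J (iota r)] => //; exists J.
      by move=> [Z [J FJ ->] Jr]; exists J.
    have [_ _ _ hU _] := okI i; apply: hU.
      by have [J0 FJ0] := F0; exists [set r | J0 (iota r)], J0.
    move=> Z [J FJ ->]; have [c [Y [eJ iY hY _]]] := repJ J FJ.
    by rewrite eJ rep_slice.
  have Yiota : forall J, F J -> forall i r, J (@iota _ _ R i r) -> YU i r.
    by move=> J FJ i r Jr; exists J.
  exists cU, YU; split => //.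
  + apply/seteqP; split.
    * move=> x [J FJ Jx]; have [c [Y [eJ iY hY _]]] := repJ J FJ.
      have Jx' := Jx; rewrite eJ in Jx'; have [Rx _ _] := Jx'.
      split => //.
        have [s0|sn0] := eqVneq (sc x) 0; first by right.
        by left; exists x; split => //; exists J.
      move=> i; apply: (Yiota J FJ); exact (iota_mem inf i (iJ J FJ) Jx).
    * move=> x [Rx bx Sx].
      set k := sc x.
      have [J0 [FJ0 J0k]] : exists J0, F J0 /\ (k != 0 -> exists y, J0 y /\ sc y != 0).
        have [k0|kn0] := eqVneq k 0.
          by have [J0 FJ0] := F0; exists J0; split => //; rewrite k0 eqxx.
        have [] := bx; last by move=> /eqP; rewrite (negbTE kn0).
        move=> [y [[J FJ Jy] sy]]; exists J; split => // _; by exists y.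
      have [c0 [Y0 [eJ0 iY0 hY0 c0fin]]] := repJ J0 FJ0.
      have fA0 : k != 0 -> finite_set (Aset Y0).
        move=> kn0; apply c0fin; have [y [J0y sy]] := J0k kn0.
        by apply/(rep_flag iY0 c0fin); exists y; rewrite -eJ0.
      set S := supp (x - k *: 1) `|` [set i | k != 0 /\ Aset Y0 i].
      have finS : finite_set S.
        rewrite /S finite_setU; split; first exact: scP Rx.
        have [k0|kn0] := eqVneq k 0.
          by apply: (@sub_finite_set _ _ set0) => // i [] /eqP.
        by apply: sub_finite_set (fA0 kn0) => i [].
      have [L eL] := (finite_seqP _).1 finS.
      have fmax : forall (L : seq I), (forall i, i \in L -> exists2 J, F J & J (iota (x i))) ->
          exists J, [/\ F J, J0 `<=` J & forall i, i \in L -> J (iota (x i))].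
        elim=> [|a L' IHL] hL; first by exists J0; split.
        have [J1 [FJ1 J01 hJ1]] := IHL (fun i iL => hL i (ltac:(by rewrite in_cons iL orbT))).
        have [Ja FJa Jax] := hL a (mem_head _ _).
        case: (tower_cmp _ _ _ infl _ _ (tF J1 FJ1) (tF Ja FJa)) => sub.
          exists J1; split => // i; rewrite in_cons => /orP[/eqP ->|]; first exact: sub.
          exact: hJ1.
        exists Ja; split => //; first exact: subset_trans J01 sub.
        move=> i; rewrite in_cons => /orP[/eqP ->//|iL]; exact: sub _ (hJ1 i iL).
      have [J [FJ J0J hJ]] : exists J, [/\ F J, J0 `<=` J & forall i, i \in L -> J (iota (x i))].
        apply: fmax => i iL; have := Sx i; move=> [J FJ Jx]; by exists J.
      exists J => //.
      have [c [Y [eJ iY hY cfin]]] := repJ J FJ.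
      rewrite eJ; split => //.
        have [k0|kn0] := eqVneq k 0; first by right.
        left; have [y [J0y sy]] := J0k kn0.
        by apply/(rep_flag iY cfin); exists y; split => //; rewrite -eJ; apply: J0J.
      move=> i; have [iL|niL] := boolP (i \in L).
        by have := hJ i iL; rewrite eJ (iota_Psi inf _ _ iY).
      have nS : ~ S i by rewrite eL /mkset /=; apply/negP.
      have nsi : ~ supp (x - k *: 1) i by move=> h; apply: nS; left.
      rewrite (Rk_comp Rx nsi) -/k.
      have [k0|kn0] := eqVneq k 0; first by rewrite k0 scale0r; exact: ideal0 (iY i).
      have Y01 : Y0 i 1 by apply: contrapT => h; apply: nS; right.
      have : J (iota (1 : R i)) by apply: J0J; rewrite eJ0 (iota_Psi inf _ _ iY0).
      rewrite eJ (iota_Psi inf _ _ iY) => Y1.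
      exact: idealZ (iY i) Logic.I Y1.
  + move=> [x [[J FJ Jx] sx]].
    have [c [Y [eJ iY hY cfin]]] := repJ J FJ.
    have hc : c by apply/(rep_flag iY cfin); exists x; rewrite -eJ.
    apply: sub_finite_set (cfin hc) => i; rewrite /Aset /mkset => nU Y1; apply: nU.
    by apply: (Yiota J FJ); rewrite eJ (iota_Psi inf _ _ iY).
Qed.

Lemma Inv_ideal J : Inv J -> is_ideal Rk J.
Proof. by move=> [c [Y [-> hY _]]]; exact (Psi_ideal inf _ (Img_ideals hY)). Qed.

Lemma Inv_sub J : Inv J -> J `<=` Rk.
Proof. by move=> [c [Y [-> hY _]]] x []. Qed.

Lemma Rk_tower : tower Rk.
Proof.
set U := \bigcup_(J in tower) J.
have tU : tower U.
  apply: twU; last by move=> J h; exact: h.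
  by exists z; apply: tw0.
have fixU : stepR U = U.
  apply/seteqP; split; last exact: infl.
  by move=> x sx; exists (stepR U) => //; apply: twS.
have [c [Y [eU hY cfin]]] := tower_inv tU.
have iY := Img_ideals hY.
have e2 := step_eq inf iY cfin; rewrite -eU fixU in e2.
have YT : forall i, Y i = [set: R i].
  move=> i; apply: contrapT => ne.
  have [_ _ _ _ hl] := okI i.
  have [r [Sr nYr]] := layer_strict (hl _ (hY i) ne).
  apply: nYr.
  have : Psi (c \/ finite_set (Aset Y)) (stepX Y) (iota r).
    by rewrite (iota_Psi inf _ _ (stepX_ideals iY)).
  by rewrite -e2 eU (iota_Psi inf _ _ iY).
have fA : finite_set (Aset Y).
  apply: (@sub_finite_set _ _ set0) => // i; rewrite /Aset /mkset YT.
  by move=> h; exfalso; apply: h.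
have eRU : Rk = U.
  apply/seteqP; split; last by rewrite eU => x [].
  move=> x Rx; rewrite e2; split => //; first by left; right.
  by move=> i; apply: step_infl; rewrite YT.
by rewrite -eRU in tU.
Qed.

Lemma main_frak : in_frakR Rk.
Proof.
split.
- split.
  + exact: (Rk1 R inf).1.
  + by move=> x y Rx Ry; exact: (RkD inf Rx Ry).1.
  + by move=> x Rx; exact: (RkN inf Rx).1.
  + by move=> x y Rx Ry; exact: (RkM inf Rx Ry).1.
  + by move=> k x Rx; exact: (RkZ inf k Rx).1.
- move=> x y _ _; apply: dpext => i; rewrite !mulE.
  by have [_ cm _ _] := H i; apply: cm.
- move=> x Rx.
  have rg : forall i (r : R i), exists s, r = r * s * r.
    move=> i r; have [_ _ rg _] := H i; have [s _ e] := rg r Logic.I; by exists s.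
  pose sf i (r : R i) := proj1_sig (cid (rg i r)).
  set k := sc x.
  pose y : P := fun i => if pselect (supp (x - k *: 1) i) then sf i (x i) else k^-1 *: 1.
  exists y.
    apply/RkP; exists k^-1; apply: sub_finite_set (scP Rx) => i.
    rewrite /supp /mkset subE scaleE oneE /y.
    by destruct (pselect (supp (x - k *: 1) i)) as [p|np]; rewrite ?subrr ?eqxx.
  apply: dpext => i; rewrite !mulE /y.
  destruct (pselect (supp (x - k *: 1) i)) as [p|np].
    exact: (proj2_sig (cid (rg i (x i)))).
  rewrite (Rk_comp Rx np) -/k -scalerAl mul1r scalerA -scalerAl mul1r scalerA.
  have [->|kn0] := eqVneq k 0; first by rewrite !mul0r.
  by rewrite mulfV // mul1r.
pose O := {J : set P | tower J}.
pose lt (a b : O) := sval a `<` sval b.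
have Oeq : forall a b : O, sval a = sval b -> a = b.
  by move=> [a pa] [b pb] /= e; exact: eq_exist.
have wf : well_founded lt.
  move=> a; apply: contrapT => nA.
  have tD : forall J, [set J | exists a : O, sval a = J /\ ~ Acc lt a] J -> tower J.
    by move=> J [a' [<- _]]; exact: proj2_sig a'.
  have [m [am [e nAam]] mmin] := tower_minimal _ _ _ infl
    [set J | exists a : O, sval a = J /\ ~ Acc lt a]
    (ex_intro _ (sval a) (ex_intro _ a (conj erefl nA))) tD.
  apply: nAam; constructor => y ly; apply: contrapT => nAy.
  have := mmin (sval y) (ex_intro _ y (conj erefl nAy)).
  by rewrite -e; case: ly.
have trans : forall a b c, lt a b -> lt b c -> lt a c.
  move=> a b c [ab nba] [bc ncb]; split; first exact: subset_trans ab bc.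
  by move=> ca; apply: nba; exact: subset_trans bc ca.
have tot : forall a b, lt a b \/ a = b \/ lt b a.
  move=> a b; have [e|ne] := pselect (sval a = sval b); first by right; left; apply: Oeq.
  case: (tower_cmp _ _ _ infl _ _ (proj2_sig a) (proj2_sig b)) => sub.
    by right; right; apply: properI => // e; apply: ne.
  by left; apply: properI.
have succ_step : forall a b : O, is_succ lt a b -> sval b = stepR (sval a).
  move=> a b [ab nb]; have ta := proj2_sig a; have tb := proj2_sig b.
  have sab := tower_next _ _ _ infl _ _ ta tb ab.
  apply/seteqP; split => //; apply: contrapT => nsub.
  have tS : tower (stepR (sval a)) by apply: twS.
  have ne : stepR (sval a) <> sval a.
    move=> e; have := tower_fix _ _ _ infl _ ta e _ tb; by case: ab.
  apply: nb; exists (exist _ _ tS); split.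
    apply: properI; first exact: infl.
    by move=> e; apply: ne.
  by apply: properI => // e; apply: nsub; rewrite -e.
have tmax : forall J, tower J -> J `<=` Rk by move=> J /tower_inv /Inv_sub.
have ss : is_socle_sequence Rk lt (fun a => sval a).
  move=> a; split.
  - move=> nb; have := tower_shape _ _ _ infl _ (proj2_sig a).
    case=> [//|[[b tb [ba _]]|ea]].
      by exfalso; apply: (nb (exist _ b tb)).
    exfalso; have : sval a 0 by apply: (tower_z _ _ _ infl _ (proj2_sig a)).
    rewrite ea => -[b [tb ba] _]; exact: (nb (exist _ b tb)).
  - move=> b h; exact (succ_step b a h).
  - move=> [b0 lb0] nsucc.
    have := tower_shape _ _ _ infl _ (proj2_sig a).
    case=> [ez|[[b tb [ba eb]]|ea]].
    + exfalso; case: lb0 => _ h; apply: h; rewrite ez.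
      exact: (tower_z _ _ _ infl _ (proj2_sig b0)).
    + exfalso; apply: (nsucc (exist _ b tb)); split => //.
      move=> [c [bc ca]]; have := tower_next _ _ _ infl _ _ tb (proj2_sig c) bc.
      by rewrite -eb => h; case: ca.
    + rewrite {1}ea; apply/seteqP; split.
        by move=> x [J [tJ Ja] Jx]; exists (exist _ J tJ).
      by move=> x [c ca cx]; exists (sval c) => //; split => //; exact: proj2_sig c.
pose top : O := exist _ Rk Rk_tower.
have [b tb [bR eR]] : exists2 b, tower b & b `<` Rk /\ Rk = stepR b.
  have [eR|[//|eR]] := tower_shape _ _ _ infl _ Rk_tower.
    exfalso; have : z (1 : P) by rewrite -eR; exact: (Rk1 R inf).1.
    by move/eqP; rewrite /z /mkset oner_eq0.
  exfalso; have : Rk (1 : P) by exact: (Rk1 R inf).1.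
  rewrite {1}eR => -[b [tb [bR nRb]] b1]; apply: nRb => x Rx.
  by rewrite -[x]mulr1; apply: (idealMl (Inv_ideal (tower_inv tb)) Rx b1).
pose sigma : O := exist _ b tb.
exists O, lt, (fun a => sval a), sigma, top.
split; first by split.
split => //.
split.
  split => //; move=> [c [bc cR]].
  have := tower_next _ _ _ infl _ _ tb (proj2_sig c) bc.
  by rewrite -eR => h; case: cR.
split.
  move=> a; have [e|ne] := pselect (sval a = Rk); first by left; apply: Oeq.
  by right; apply: properI => //; apply: tmax (proj2_sig a).
split => //.
split; first exact: proper_ne bR.
move=> a b' sab; rewrite (succ_step _ _ sab).
have [c [Y [eA hY cfin]]] := tower_inv (proj2_sig a).
have iY := Img_ideals hY.
rewrite eA (step_eq inf iY cfin).
apply: (layer_Psi inf iY cfin).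
  by move=> i ne; have [_ _ _ _ hl] := okI i; apply: hl.
have [ab nba] := sab.1.
rewrite (succ_step _ _ sab) eA (step_eq inf iY cfin) in nba.
apply: contrapT => h; apply: nba => x Sx; apply: contrapT => nx; apply: h.
by exists x.
Qed.

End Final.


End Final.
Import Final.

Unset Implicit Arguments.
Theorem lemma5p11 (K : fieldType) (I : pointedType) (R : I -> algType K) :
  infinite_set [set: I] ->
  (forall i : I, in_frakR [set: R i]) ->
  in_frakR (Rkappa R).
Proof. move=> inf H; exact: (main_frak inf H). Qed.
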